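(* Consider two words $ubav$ and $uabv$ with $a,b \in A$. Let $(x_\ell,y_\ell)$ denote the attribute of position $\ell$ in $ubav$, and let $(x'_\ell,y'_\ell)$ denote the attribute of position $\ell$ in $uabv$. Suppose that $|ub| = i$ and that the attributes $(x_i,y_i)$ and $(x_{i+1},y_{i+1})$ satisfy $x_i = x_{i+1}$. Then all positions $\ell$ satisfy $x'_\ell = x_\ell$.
   Context: $A$ is a finite alphabet. An $\mathsf{X}$-ranker is a nonempty word over $\{\mathsf{X}_a : a\in A\}$ (''go to the next $a$-position'', starting with the first $a$-position) and a $\mathsf{Y}$-ranker a nonempty word over $\{\mathsf{Y}_a : a\in A\}$ (''go to the previous $a$-position'', starting with the last $a$-position). The attribute of position $\ell$ of a word is $(x_\ell,y_\ell)$, where $x_\ell$ (resp. $y_\ell$) is the length of a shortest $\mathsf{X}$-ranker (resp. $\mathsf{Y}$-ranker) reaching $\ell$. *)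

(* Defs.v *)
From mathcomp Require Import all_boot.
Set Implicit Arguments. Unset Strict Implicit. Unset Printing Implicit Defensive.

(* Positions of a word w are 1, ..., size w; position q carries nth _ w q.-1.
   Position 0 (resp. size w + 1) is the virtual start point of X- (resp. Y-)rankers. *)
Section Rankers.
Variable A : finType.

(* X_a from position p : the first a-position strictly after p. *)
Definition nextX (w : seq A) (c : A) (p : nat) : option nat :=
  let k := find (pred1 c) (drop p w) in
  if k < size (drop p w) then Some (p + k).+1 else None.

(* Y_a from position p : the last a-position strictly before p. *)
Definition prevY (w : seq A) (c : A) (p : nat) : option nat :=
  let s := rev (take p.-1 w) in
  let k := find (pred1 c) s in
  if k < size s then Some (p.-1 - k) else None.

Definition runX (w : seq A) (r : seq A) : option nat :=
  foldl (fun op c => obind (nextX w c) op) (Some 0) r.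

Definition runY (w : seq A) (r : seq A) : option nat :=
  foldl (fun op c => obind (prevY w c) op) (Some (size w).+1) r.

(* x-attribute: length of a shortest (nonempty) X-ranker reaching position l.
   For 1 <= l <= size w such a ranker of length <= l exists, so the search over
   lengths 1 .. size w finds it. *)
Definition xattr (w : seq A) (l : nat) : nat :=
  (find (fun n => [exists t : n.+1.-tuple A, runX w t == Some l]) (iota 0 (size w))).+1.

Definition yattr (w : seq A) (l : nat) : nat :=
  (find (fun n => [exists t : n.+1.-tuple A, runY w t == Some l]) (iota 0 (size w))).+1.

End Rankers.

(* Main.v *)
Require Import Defs.
From mathcomp Require Import all_boot zify.
Set Implicit Arguments. Unset Strict Implicit. Unset Printing Implicit Defensive.

Section Aux.
Variable A : finType.
Implicit Types (w s u v : seq A) (c : A).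

Lemma nextX_drop w w' c q : drop q w = drop q w' -> nextX w c q = nextX w' c q.
Proof. by rewrite /nextX => ->. Qed.

Lemma nextX_shift u s c : nextX (u ++ s) c (size u) = omap (addn (size u)) (nextX s c 0).
Proof.
rewrite /nextX drop_size_cat // drop0.
by case: ifP => //= _; rewrite add0n addnS.
Qed.

Lemma nextX_cons x s c : nextX (x :: s) c 0 =
  if x == c then Some 1 else omap S (nextX s c 0).
Proof.
rewrite /nextX !drop0 /=. case: (x == c) => //=.
by rewrite ltnS; case: ifP.
Qed.

Lemma swap_N0 u b a v c :
  nextX (u ++ b :: a :: v) c 0 = nextX (u ++ a :: b :: v) c 0 \/
  (nextX (u ++ b :: a :: v) c 0 = Some (size u).+1 /\ nextX (u ++ a :: b :: v) c 0 = Some (size u).+2) \/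
  (nextX (u ++ b :: a :: v) c 0 = Some (size u).+2 /\ nextX (u ++ a :: b :: v) c 0 = Some (size u).+1).
Proof.
elim: u => [|x u IH] /=.
- rewrite !nextX_cons. case: (b == c); case: (a == c); auto.
- rewrite !nextX_cons. case: (x == c); first by left.
  case: IH => [->|[[-> ->]|[-> ->]]]; auto.
Qed.

Lemma nextX_lt u b a v c q : q <= size u ->
  nextX (u ++ b :: a :: v) c q = nextX (u ++ a :: b :: v) c q \/
  (nextX (u ++ b :: a :: v) c q = Some (size u).+1 /\ nextX (u ++ a :: b :: v) c q = Some (size u).+2) \/
  (nextX (u ++ b :: a :: v) c q = Some (size u).+2 /\ nextX (u ++ a :: b :: v) c q = Some (size u).+1).
Proof.
move=> qu.
have Hq : size (take q u) = q by rewrite size_takel.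
rewrite -(cat_take_drop q u) -!catA size_cat Hq.
have E1 := nextX_shift (take q u) (drop q u ++ b :: a :: v) c.
have E2 := nextX_shift (take q u) (drop q u ++ a :: b :: v) c.
rewrite Hq in E1 E2. rewrite E1 E2.
case: (swap_N0 (drop q u) b a v c) => [->|[[-> ->]|[-> ->]]]; [by left| |];
 rewrite /= !addnS; auto.
Qed.

Lemma nextX_far u b a v c q : (size u).+2 <= q ->
  nextX (u ++ b :: a :: v) c q = nextX (u ++ a :: b :: v) c q.
Proof.
move=> qu; apply: nextX_drop; rewrite !drop_cat.
have -> : q < size u = false by apply/negbTE; rewrite -leqNgt; lia.
have -> : q - size u = (q - (size u).+2).+2 by lia.
by [].
Qed.

Lemma nextX_mid u b a v c :
  nextX (u ++ b :: a :: v) c (size u).+1 =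
  if a == c then Some (size u).+2 else nextX (u ++ b :: a :: v) c (size u).+2.
Proof.
have E1 : u ++ b :: a :: v = (u ++ [:: b]) ++ a :: v by rewrite -catA.
have E2 : u ++ b :: a :: v = (u ++ [:: b; a]) ++ v by rewrite -catA.
have S1 : size (u ++ [:: b]) = (size u).+1 by rewrite size_cat addn1.
have S2 : size (u ++ [:: b; a]) = (size u).+2 by rewrite size_cat addn2.
have L1 := nextX_shift (u ++ [:: b]) (a :: v) c.
have L2 := nextX_shift (u ++ [:: b; a]) v c.
rewrite S1 -E1 in L1; rewrite S2 -E2 in L2.
rewrite L1 L2 nextX_cons.
case: (a == c); first by rewrite /= addn1.
by case: (nextX v c 0) => //= k; rewrite -addSnnS.
Qed.

Lemma nextX_spec w c q l : nextX w c q = Some l -> q < l /\ nth c w l.-1 = c.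
Proof.
rewrite /nextX; case: ifP => // H [<-]; split; first by rewrite ltnS leq_addr.
rewrite /= -nth_drop. rewrite -has_find in H.
by have /eqP := nth_find c H.
Qed.

Lemma nextX_self w x0 q : q < size w -> nextX w (nth x0 w q) q = Some q.+1.
Proof. by move=> qs; rewrite /nextX (drop_nth x0) //= eqxx /= addn0. Qed.

End Aux.

Section Aux2.
Variable A : finType.
Implicit Types (w s u v : seq A) (c : A).

Definition R w n l := exists r : seq A, size r = n /\ runX w r = Some l.
Definition D w n l := exists2 k, k <= n & R w k l.
Definition Pw w l := fun n => [exists t : n.+1.-tuple A, runX w t == Some l].

Lemma runX_rcons w r c : runX w (rcons r c) = obind (nextX w c) (runX w r).
Proof. by rewrite /runX foldl_rcons. Qed.

Lemma D0 w l : D w 0 l <-> l = 0.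
Proof.
split.
- case=> k; rewrite leqn0 => /eqP -> [r [/size0nil -> ]]. by case.
- by move=> ->; exists 0 => //; exists [::].
Qed.

Lemma Dsucc w n l : D w n.+1 l <-> l = 0 \/ exists q c, D w n q /\ nextX w c q = Some l.
Proof.
split.
- case=> k kn [r [sr rr]]. case/lastP: r sr rr => [|r c] sr rr.
  + by left; move: rr => [<-].
  + right. rewrite runX_rcons in rr. case E: (runX w r) rr => [q|] //= rr.
    exists q, c; split => //. exists (size r); last by exists r.
    by move: kn; rewrite -sr size_rcons.
- case=> [->|[q [c [[k kn [r [sr rr]]] nq]]]].
  + by exists 0 => //; exists [::].
  + exists k.+1; first done. exists (rcons r c); by rewrite size_rcons sr runX_rcons rr /=.
Qed.

Lemma Dmono w n l : D w n l -> D w n.+1 l.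
Proof. by case=> k kn HR; exists k => //; exact: leqW. Qed.

Lemma Dself w (x0 : A) l : l <= size w -> D w l l.
Proof.
elim: l => [|l IH] hl; first by apply/D0.
apply/Dsucc; right; exists l, (nth x0 w l); split; first by apply: IH; exact: ltnW.
exact: nextX_self.
Qed.

Lemma PwP w l n : reflect (R w n.+1 l) (Pw w l n).
Proof.
apply: (iffP existsP) => [[t /eqP H]|[r [sr rr]]].
- by exists t; split => //; exact: size_tuple.
- have sr' : size r == n.+1 by apply/eqP.
  by exists (Tuple sr'); exact/eqP.
Qed.

Lemma QwP w l n : l != 0 -> reflect (D w n.+1 l) (has (Pw w l) (iota 0 n.+1)).
Proof.
move=> l0; apply: (iffP hasP) => [[j jin /PwP HR]|[k kn [r [sr rr]]]].
- by exists j.+1 => //; move: jin; rewrite mem_iota.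
- case: k kn sr => [|j] kn sr.
  + by move: rr; rewrite (size0nil sr) => -[E]; rewrite -E in l0.
  + exists j; first by rewrite mem_iota.
    by apply/PwP; exists r.
Qed.

Lemma find_lt (P : pred nat) N n : P n -> n < N -> find P (iota 0 N) <= n.
Proof.
move=> Pn nN; rewrite leqNgt; apply/negP => nk.
by have := before_find 0 nk; rewrite nth_iota // add0n Pn.
Qed.

Lemma find_holds (P : pred nat) N : find P (iota 0 N) < N -> P (find P (iota 0 N)).
Proof.
move=> lt.
have hQ : has P (iota 0 N) by rewrite has_find size_iota.
by have := nth_find 0 hQ; rewrite nth_iota // add0n.
Qed.

Lemma find_has (P : pred nat) N :
  find P (iota 0 N) = find (fun n => has P (iota 0 n.+1)) (iota 0 N).
Proof.
set F := find P _. set G := find _ _.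
have sF : F <= N by rewrite -[X in _ <= X](size_iota 0 N) find_size.
have sG : G <= N by rewrite -[X in _ <= X](size_iota 0 N) find_size.
apply/eqP; rewrite eqn_leq; apply/andP; split.
- rewrite leqNgt; apply/negP => GF.
  have GN : G < N by apply: leq_trans GF sF.
  have /hasP [j jin Pj] := find_holds GN.
  move: jin; rewrite mem_iota add0n => jG.
  have := find_lt Pj (leq_trans jG GN). rewrite -/F. lia.
- rewrite leqNgt; apply/negP => FG.
  have FN : F < N by apply: leq_trans FG sG.
  have PF := find_holds FN.
  have : has P (iota 0 F.+1) by apply/hasP; exists F; [rewrite mem_iota; lia | exact PF].
  move=> HF; have := find_lt (P := fun n => has P (iota 0 n.+1)) HF FN. rewrite -/G. lia.
Qed.

Lemma mono_le (Q : pred nat) k n : (forall n, Q n -> Q n.+1) -> Q k -> k <= n -> Q n.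
Proof.
move=> m qk /subnK <-; elim: (n - k) => //= d IH; rewrite addSn; exact: m.
Qed.

Lemma find_mono (Q : pred nat) N : (forall n, Q n -> Q n.+1) ->
  find Q (iota 0 N) < N -> forall n, Q n = (find Q (iota 0 N) <= n).
Proof.
move=> m lt n; apply/idP/idP => [Qn|kn].
- rewrite leqNgt; apply/negP => nk.
  have := find_lt Qn (ltn_trans nk lt). lia.
- exact: mono_le m (find_holds lt) kn.
Qed.

Lemma xattrE w l : xattr w l = (find (fun n => has (Pw w l) (iota 0 n.+1)) (iota 0 (size w))).+1.
Proof. by rewrite /xattr find_has. Qed.

End Aux2.

Section Main.
Variable A : finType.

Lemma nth_W (u v : seq A) b a x0 :
  nth x0 (u ++ b :: a :: v) (size u) = b /\ nth x0 (u ++ b :: a :: v) (size u).+1 = a.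
Proof. rewrite !nth_cat ltnn subnn ltnNge leqnSn /= subSnn //. Qed.

Lemma main_equiv (u v : seq A) a b :
  a != b ->
  (forall n, D (u ++ b :: a :: v) n (size u).+1 <-> D (u ++ b :: a :: v) n (size u).+2) ->
  forall n l, D (u ++ b :: a :: v) n l <-> D (u ++ a :: b :: v) n l.
Proof.
move=> nab HD; set W := u ++ b :: a :: v; set W' := u ++ a :: b :: v; set s := size u.
have [nWb nWa] := nth_W u v b a a. have [nW'a nW'b] := nth_W u v a b a.
rewrite -/W -/s in nWb nWa. rewrite -/W' -/s in nW'a nW'b.
elim=> [|n IH] l; first by rewrite !D0.
split => HL.
- move/Dsucc: (HL) => [->|[q [c [Dq nq]]]]; first by apply/Dsucc; left.
  case: (ltngtP q s.+1) => [qlt|qgt|qeq].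
  + have := nextX_lt b a v c (qlt : q <= size u); rewrite -/W -/W' -/s; case=> [E|[[E1 E2]|[E1 E2]]].
    * by apply/Dsucc; right; exists q, c; split; [apply/IH|rewrite -E].
    * rewrite nq in E1; case: E1 => El; subst l.
      have := (HD n.+1).1 HL => /Dsucc [//|[q2 [c2 [Dq2 nq2]]]]; rewrite -/W -/s in nq2 Dq2.
      have [q2lt nth2] := nextX_spec nq2. rewrite /= (nth_W u v b a c2).2 in nth2. subst c2.
      case: (ltngtP q2 s.+1) => [q2lt'|q2gt|q2eq].
      -- have := nextX_lt b a v a (q2lt' : q2 <= size u); rewrite -/W -/W' -/s; case=> [E|[[F1 F2]|[F1 F2]]].
         ++ rewrite E in nq2. have [_ ] := nextX_spec nq2. rewrite /= (nth_W u v a b a).2 => ba.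
            by rewrite ba eqxx in nab.
         ++ by move: F1; rewrite nq2 => -[]; lia.
         ++ by apply/Dsucc; right; exists q2, a; split; [apply/IH|].
      -- lia.
      -- by subst q2; apply: Dmono; apply/IH.
    * rewrite nq in E1; case: E1 => El; subst l.
      have := (HD n.+1).2 HL => /Dsucc [//|[q2 [c2 [Dq2 nq2]]]]; rewrite -/W -/s in nq2 Dq2.
      have [q2lt nth2] := nextX_spec nq2. rewrite /= (nth_W u v b a c2).1 in nth2. subst c2.
      have q2lt' : q2 <= size u by rewrite -/s; lia.
      have := nextX_lt b a v b q2lt'; rewrite -/W -/W' -/s; case=> [E|[[F1 F2]|[F1 F2]]].
      -- rewrite E in nq2. have [_ ] := nextX_spec nq2. rewrite /= (nth_W u v a b b).1 => ab.
         by rewrite ab eqxx in nab.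
      -- by apply/Dsucc; right; exists q2, b; split; [apply/IH|].
      -- by move: F1; rewrite nq2 => -[]; lia.
  + by apply/Dsucc; right; exists q, c; split; [apply/IH|rewrite -nextX_far].
  + subst q. have Dq2 := (HD n).1 Dq.
    move: nq; rewrite /W nextX_mid -/W; case: ifP => [ac [<-]|ac nq].
    * by apply: Dmono; apply/IH.
    * by apply/Dsucc; right; exists s.+2, c; split; [apply/IH|rewrite -nextX_far].
- move/Dsucc: (HL) => [->|[q [c [Dq nq]]]]; first by apply/Dsucc; left.
  move/IH: Dq => Dq.
  case: (ltngtP q s.+1) => [qlt|qgt|qeq].
  + have := nextX_lt b a v c (qlt : q <= size u); rewrite -/W -/W' -/s; case=> [E|[[E1 E2]|[E1 E2]]].
    * by apply/Dsucc; right; exists q, c; split; [|rewrite E].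
    * rewrite nq in E2; case: E2 => El; subst l. apply/(HD n.+1).
      by apply/Dsucc; right; exists q, c.
    * rewrite nq in E2; case: E2 => El; subst l. apply/(HD n.+1).
      by apply/Dsucc; right; exists q, c.
  + by apply/Dsucc; right; exists q, c; split; [|rewrite nextX_far].
  + subst q. have Dq2 := (HD n).1 Dq.
    move: nq; rewrite /W' nextX_mid -/W'; case: ifP => [ac [<-]|ac nq].
    * by apply: Dmono.
    * by apply/Dsucc; right; exists s.+2, c; split; [|rewrite nextX_far].
Qed.

End Main.

Theorem lemma10 (A : finType) (u v : seq A) (a b : A) (i : nat) :
  size (u ++ [:: b]) = i ->
  xattr (u ++ b :: a :: v) i = xattr (u ++ b :: a :: v) i.+1 ->
  forall l : nat, 1 <= l <= size (u ++ b :: a :: v) ->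
    xattr (u ++ a :: b :: v) l = xattr (u ++ b :: a :: v) l.
Proof.
move=> Hi H l /andP [l1 _].
case: (eqVneq a b) => [->|nab]; first by [].
have l0 : l != 0 by rewrite -lt0n.
rewrite size_cat addn1 in Hi; subst i.
set W := u ++ b :: a :: v.
have sW : size W = (size u + 2 + size v) by rewrite /W size_cat /=; lia.
have q1 : forall n, reflect (D W n.+1 (size u).+1) (has (Pw W (size u).+1) (iota 0 n.+1)).
  by move=> n; apply: QwP.
have q2 : forall n, reflect (D W n.+1 (size u).+2) (has (Pw W (size u).+2) (iota 0 n.+1)).
  by move=> n; apply: QwP.
have HD : forall n, D W n (size u).+1 <-> D W n (size u).+2.
  rewrite !xattrE -/W in H.
  set Q1 := (fun n => has (Pw W (size u).+1) (iota 0 n.+1)) in H.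
  set Q2 := (fun n => has (Pw W (size u).+2) (iota 0 n.+1)) in H.
  have m1 : forall n, Q1 n -> Q1 n.+1.
    by move=> n /q1 /Dmono /q1.
  have m2 : forall n, Q2 n -> Q2 n.+1.
    by move=> n /q2 /Dmono /q2.
  have f1 : find Q1 (iota 0 (size W)) < size W.
    apply: (@leq_ltn_trans (size u)); last by rewrite sW; lia.
    apply: find_lt; last by rewrite sW; lia.
    apply/q1. apply: (Dself a). rewrite sW; lia.
  have f2 : find Q2 (iota 0 (size W)) < size W.
    apply: (@leq_ltn_trans (size u).+1); last by rewrite sW; lia.
    apply: find_lt; last by rewrite sW; lia.
    apply/q2. apply: (Dself a). rewrite sW; lia.
  case=> [|n]; first by rewrite !D0.
  have E1 := find_mono m1 f1 n. have E2 := find_mono m2 f2 n.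
  case: H => H. rewrite H in E1.
  split => [/q1 | /q2] HH.
  - apply/q2; have : Q2 n by rewrite E2 -E1; exact HH. by [].
  - apply/q1; have : Q1 n by rewrite E1 -E2; exact HH. by [].
have Hsz : size (u ++ a :: b :: v) = size W by rewrite /W !size_cat.
rewrite !xattrE Hsz; congr S; apply: eq_find => n.
apply/idP/idP => /(QwP _ _ l0) HH; apply/(QwP _ _ l0).
- by apply/(main_equiv nab HD).
- by apply/(main_equiv nab HD).
Qed.
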